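(* Let $n\ge 1$ and consider units $i\in[n]=\{1,\dots,n\}$. A random binary treatment vector $\bm Z=(Z_1,\dots,Z_n)$ is drawn from a known probability distribution $\mathbb{P}_{\bm Z}$ on $\{0,1\}^n$, with support $\mathcal{Z}=\{\bm z\in\{0,1\}^n:\mathbb{P}_{\bm Z}(\bm z)>0\}$. Each unit has non-stochastic potential outcomes $Y_i(\bm z)\in\mathbb{R}$, $\bm z\in\mathcal Z$, and observed outcome $Y_i=Y_i(\bm Z)$. Let $E^0:[n]\times\mathcal Z\to\mathcal E^0$ and $E^1:[n]\times\mathcal Z\to\mathcal E^1$ be exposure mappings into finite sets (write $E_i(\bm z)=E(i,\bm z)$, with range $\mathcal E_i$), such that $E^0$ is coarser than $E^1$: there is a surjective map $c^{1\to0}:\mathcal E^1\to\mathcal E^0$ with $c^{1\to 0}(E^1_i(\bm z'))=E^0_i(\bm z)$ for all $i\in[n]$, $\bm z\in\mathcal Z$ and all $\bm z'\in\mathcal Z$ with $E^0_i(\bm z')=E^0_i(\bm z)$. For $\bm z\in\mathcal Z$ let $\tilde{\mathcal E}^1_i(\bm z)=\{e^1\in\mathcal E^1_i: c^{1\to0}(e^1)=E^0_i(\bm z)\}$. Let $\mathcal S\subseteq[n]$ be a fixed (non-random) set of focal units, and define the focal assignment set $$\mathcal C^{\mathcal S}(\bm z)=\{\bm z''\in\mathcal Z: E^1_i(\bm z'')\in\tilde{\mathcal E}^1_i(\bm z)\ \text{for all } i\in\mathcal S\}.$$ Let $T(\bm z,\bm y)$ be a fixed real-valued test statistic, and write $\bm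 Y_{\mathcal S}(\bm z)=(Y_i(\bm z))_{i\in\mathcal S}$, $\bm Y_{\mathcal S}=\bm Y_{\mathcal S}(\bm Z)$. For a set $\mathcal C\subseteq\mathcal Z$ with $\bm Z\in\mathcal C$, define the conditional randomization $p$-value $$\mathrm{p}(\bm Z,\mathcal C)=\Pr\big[T(\bm z^*,\bm Y_{\mathcal S}(\bm z^* ))\ge T(\bm Z,\bm Y_{\mathcal S})\,\big|\,\bm z^*\in\mathcal C\big],$$ the probability being over $\bm z^*\sim\mathbb P_{\bm Z\mid \bm Z\in\mathcal C}$ (i.e. $\mathbb P_{\bm Z}$ conditioned on $\mathcal C$), with $\bm Z$ held fixed. For $R\ge1$ let $\bm z^{(1)},\dots,\bm z^{(R)}$ be drawn independently from $\mathbb P_{\bm Z\mid\bm Z\in\mathcal C^{\mathcal S}}$ where $\mathcal C^{\mathcal S}=\mathcal C^{\mathcal S}(\bm Z)$, and set $\hat p_R=\frac1R\sum_{r=1}^R\bm 1\{T(\bm z^{(r)},\bm Y_{\mathcal S}(\bm z^{(r)}))\ge T(\bm Z,\bm Y_{\mathcal S})\}$. Consider the null hypothesis $\mathbb H_0$: $E^0$ is a correct exposure mapping, i.e. for all $i\in[n]$ and $\bm z,\bm z'\in\mathcal Z$, $E^0_i(\bm z)=E^0_i(\bm z')$ implies $Y_i(\bm z)=Y_i(\bm z')$. Then: (i) Under $\mathbb H_0$, for any $\alpha\in(0,1)$, $\Pr[\mathrm p(\bm Z,\mathcal C^{\mathcal S})\le\alpha\mid \bm Z\in\mathcal C^{\mathcal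 S}]\le\alpha$, where the focal assignment set $\mathcal C^{\mathcal S}$ is held fixed (at its realized value) and the probability is over $\bm Z\sim\mathbb P_{\bm Z}$ conditional on $\bm Z\in\mathcal C^{\mathcal S}$. (ii) $|\hat p_R-\mathrm p(\bm Z,\mathcal C^{\mathcal S})|=O_P(R^{-1/2})$ as $R\to\infty$, where the probability is over the independent draws $\{\bm z^{(r)}\}\sim\mathbb P_{\bm Z\mid\bm Z\in\mathcal C^{\mathcal S}}$.
   Context: Design-based setting: all randomness comes from the treatment assignment $\bm Z$ (and, in (ii), from the Monte Carlo draws). An exposure mapping $E:[n]\times\mathcal Z\to\mathcal E$ has finite codomain; $\mathcal E_i$ denotes the range of $\bm z\mapsto E(i,\bm z)$. Under $\mathbb H_0$, for every $\bm z^*\in\mathcal C^{\mathcal S}(\bm Z)$ the focal units' potential outcomes satisfy $\bm Y_{\mathcal S}(\bm z^* )=\bm Y_{\mathcal S}$, so the $p$-value is computable from observed data. $O_P(R^{-1/2})$ means bounded in probability after multiplication by $R^{1/2}$. *)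

(* Defs.v *)
From HB Require Import structures.
From mathcomp Require Import all_boot all_order all_algebra.
From mathcomp Require Import reals.
Set Implicit Arguments. Unset Strict Implicit. Unset Printing Implicit Defensive.
Import Order.TTheory GRing.Theory Num.Theory.
Local Open Scope ring_scope.

(* Treatment assignments z in {0,1}^n, units indexed by 'I_n = {0,..,n-1}. *)
Definition assign (n : nat) := {ffun 'I_n -> bool}.

Section Design.
Variables (R : realType) (n : nat).
Variable P : assign n -> R.

Definition zsupport : {set assign n} := [set z | 0 < P z].

Definition exp_range (ET : finType) (E : 'I_n -> assign n -> ET) (i : 'I_n)
  : {set ET} := [set e | [exists z, (z \in zsupport) && (E i z == e)]].

Variables (E0T E1T : finType) (E0 : 'I_n -> assign n -> E0T)
          (E1 : 'I_n -> assign n -> E1T) (c : E1T -> E0T).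

Definition tildeE1 (i : 'I_n) (z : assign n) : {set E1T} :=
  [set e in exp_range E1 i | c e == E0 i z].

Definition focal_set (S : {set 'I_n}) (z : assign n) : {set assign n} :=
  [set z2 in zsupport | [forall i in S, E1 i z2 \in tildeE1 i z]].

End Design.

Section PValue.
Variables (R : realType) (n : nat) (P : assign n -> R).
Variables (Y : 'I_n -> assign n -> R) (S : {set 'I_n}).
(* test statistic T(z, y); y is the focal outcome vector Y_S, encoded as a
   vector over 'I_n whose non-focal coordinates are set to 0 *)
Variable T : assign n -> {ffun 'I_n -> R} -> R.

Definition YS (z : assign n) : {ffun 'I_n -> R} :=
  [ffun i => if i \in S then Y i z else 0].

Definition condP (C : {set assign n}) (z : assign n) : R :=
  if z \in C then P z / (\sum_(z' in C) P z') else 0.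

Definition exceeds (z zs : assign n) : R :=
  ((T z (YS z) <= T zs (YS zs))%R)%:R.

Definition pval (z : assign n) (C : {set assign n}) : R :=
  \sum_(zs in C) condP C zs * exceeds z zs.

Definition phat (m : nat) (z : assign n) (w : {ffun 'I_m -> assign n}) : R :=
  (\sum_(r < m) exceeds z (w r)) / m%:R.

(* probability, under m i.i.d. draws from P_{Z|Z in C}, of an event on draws *)
Definition iid_prob (m : nat) (C : {set assign n})
  (A : {ffun 'I_m -> assign n} -> bool) : R :=
  \sum_(w : {ffun 'I_m -> assign n}) (\prod_(r < m) condP C (w r)) * (A w)%:R.

End PValue.

(* Main.v *)
Require Import Defs.
From HB Require Import structures.
From mathcomp Require Import all_boot all_order all_algebra.
From mathcomp Require Import reals.
From mathcomp Require Import ring lra.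
Import Order.TTheory GRing.Theory Num.Theory.
Local Open Scope ring_scope.

Theorem theorem1 (R : realType) (n : nat) (P : assign n -> R)
  (E0T E1T : finType) (E0 : 'I_n -> assign n -> E0T)
  (E1 : 'I_n -> assign n -> E1T) (c : E1T -> E0T)
  (S : {set 'I_n}) (Y : 'I_n -> assign n -> R)
  (T : assign n -> {ffun 'I_n -> R} -> R) :
  (1 <= n)%N ->
  (* P_Z is a probability distribution on {0,1}^n *)
  (forall z, 0 <= P z) -> \sum_z P z = 1 ->
  (* E^0 coarser than E^1 via a surjective c *)
  (forall e0 : E0T, exists e1 : E1T, c e1 = e0) ->
  (forall i z z', z \in zsupport P -> z' \in zsupport P ->
     E0 i z' = E0 i z -> c (E1 i z') = E0 i z) ->
  (* null hypothesis H0: E^0 is a correct exposure mapping *)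
  (forall i z z', z \in zsupport P -> z' \in zsupport P ->
     E0 i z = E0 i z' -> Y i z = Y i z') ->
  forall Z0 : assign n, Z0 \in zsupport P ->
  let CS := focal_set P E0 E1 c S Z0 in
  (* (i) validity, conditional on Z in C^S (held fixed) *)
  (forall alpha : R, 0 < alpha < 1 ->
     \sum_(z in CS) condP P CS z * ((pval P Y S T z CS <= alpha)%R)%:R <= alpha)
  /\
  (* (ii) |p_hat_m - p(Z0, C^S)| = O_P(m^{-1/2}) as m -> oo *)
  (forall eps : R, 0 < eps -> exists M : R, 0 < M /\ exists m0 : nat,
     forall m : nat, (m0 <= m)%N -> (0 < m)%N ->
       iid_prob (m:=m) P CS
         (fun w => M / Num.sqrt (m%:R) < `|phat Y S T Z0 w - pval P Y S T Z0 CS|)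
       < eps).
Proof.
move=> _ P0 _ _ Hc H0 Z0 HZ0 CS.
have Z0CS : Z0 \in CS.
  rewrite inE HZ0 /=; apply/forallP => i; apply/implyP => _.
  rewrite inE; apply/andP; split.
    by rewrite inE; apply/existsP; exists Z0; rewrite HZ0 eqxx.
  by rewrite (Hc i Z0 Z0 HZ0 HZ0 erefl).
set s := \sum_(z' in CS) P z'.
have s_gt0 : 0 < s.
  rewrite /s (bigD1 Z0) //= ltr_wpDr //; first by apply: sumr_ge0 => *.
  by move: HZ0; rewrite inE.
set q := condP P CS.
have q_ge0 : forall z, 0 <= q z.
  by move=> z; rewrite /q /condP; case: ifP => // _; rewrite divr_ge0 // ltW.
have q_sum : \sum_z q z = 1.
  rewrite /q /condP -big_mkcond /= -mulr_suml -/s divff //.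
  by rewrite gt_eqF.
have q_sumCS : \sum_(z in CS) q z = 1.
  rewrite -q_sum [RHS](bigID (mem CS)) /= [X in _ + X]big1 ?addr0 //.
  by move=> z /negbTE; rewrite /q /condP => ->.
have YSeq : forall z, z \in CS -> YS Y S z = YS Y S Z0.
  move=> z; rewrite inE => /andP [zsup /forallP Hz].
  apply/ffunP => i; rewrite !ffunE; case: ifP => // iS.
  move: (Hz i); rewrite iS /= inE => /andP [_ /eqP Hci].
  apply: H0 => //; by rewrite -Hci (Hc i z z zsup zsup erefl).
set t := fun z => T z (YS Y S Z0).
have pvE : forall z, z \in CS ->
    pval P Y S T z CS = \sum_(zs in CS) q zs * ((t z <= t zs)%R)%:R.
  move=> z zC; apply: eq_bigr => zs zsC.
  by rewrite /exceeds (YSeq z zC) (YSeq zs zsC).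
split.
- move=> alpha /andP [a0 a1].
  case: (pickP [pred z | (z \in CS) && (pval P Y S T z CS <= alpha)]) => [z1 /= /andP [z1C z1a] | none]; last first.
    rewrite big1 ?ltW // => z zC; move: (none z); rewrite /= zC /= => ->.
    by rewrite mulr0.
  set A := [pred z | (z \in CS) && (pval P Y S T z CS <= alpha)].
  have Az1 : A z1 by rewrite /A /= z1C z1a.
  case: (arg_minP t Az1) => zs /andP [zsC zsa] zsmin.
  apply: le_trans zsa; rewrite pvE //.
  apply: ler_sum => z zC; apply: ler_wpM2l; first exact: q_ge0.
  case Hz: (pval P Y S T z CS <= alpha); last by rewrite ler0n.
  have -> : (t zs <= t z) by apply: zsmin; rewrite /A /= zC Hz.
  by [].
- move=> eps eps0.
  set p := pval P Y S T Z0 CS.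
  set ex := exceeds Y S T Z0.
  have ex01 : forall z, 0 <= ex z <= 1.
    by move=> z; rewrite /ex /exceeds; case: (T _ _ <= T _ _)%R; rewrite /= ?lexx ?ler01.
  have sumq : forall g, \sum_z q z * g z = \sum_(z in CS) q z * g z.
    move=> g; rewrite [LHS](bigID (mem CS)) /= [X in _ + X]big1 ?addr0 //.
    by move=> z /negbTE; rewrite /q /condP => ->; rewrite mul0r.
  have pE : p = \sum_z q z * ex z by rewrite sumq.
  have p01 : 0 <= p <= 1.
    rewrite pE; apply/andP; split.
      by apply: sumr_ge0 => z _; rewrite mulr_ge0 //; case/andP: (ex01 z).
    rewrite -q_sum; apply: ler_sum => z _; rewrite ler_piMr //.
    by case/andP: (ex01 z).
  set f := fun z => ex z - p.
  have f2 : forall z, f z ^+ 2 <= 1.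
    move=> z; case/andP: (ex01 z) => h1 h2; case/andP: p01 => h3 h4.
    rewrite /f; nra.
  have fmean : \sum_z q z * f z = 0.
    rewrite /f; under eq_bigr => z _ do rewrite mulrBr.
    by rewrite sumrB -pE -mulr_suml q_sum mul1r subrr.
  set V := \sum_z q z * f z ^+ 2.
  have V1 : V <= 1.
    rewrite /V -q_sum; apply: ler_sum => z _; rewrite ler_piMr //.
  exists (1 + eps^-1); split; first by rewrite addr_gt0 ?invr_gt0.
  exists 0%N => m _ m0.
  have Var : \sum_(w : {ffun 'I_m -> assign n}) (\prod_(r < m) q (w r)) *
       (\sum_(r < m) f (w r)) ^+ 2 = m%:R * V.
    have step : forall r s1 : 'I_m,
      \sum_(w : {ffun 'I_m -> assign n}) (\prod_(t < m) q (w t)) * (f (w r) * f (w s1))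
      = \prod_(t < m) \sum_z (q z * (if t == r then f z else 1) * (if t == s1 then f z else 1)).
      move=> r s1; rewrite bigA_distr_bigA /=; apply: eq_bigr => w _.
      rewrite big_split big_split /= -!big_mkcond /= !big_pred1_eq.
      by rewrite mulrA.
    under eq_bigr => w _ do rewrite expr2 mulr_suml big_distrr /=.
    under eq_bigr => w _ do under eq_bigr => r _ do rewrite mulr_sumr big_distrr /=.
    rewrite exchange_big /=.
    under eq_bigr => r _ do rewrite exchange_big /=.
    under eq_bigr => r _ do under eq_bigr => s0 _ do rewrite step.
    transitivity (\sum_(r < m) V); last by rewrite sumr_const card_ord mulr_natl.
    apply: eq_bigr => r _.
    rewrite (bigD1 r) //=.
    rewrite [X in _ + X](_ : _ = 0) ?addr0; last first.
      apply: big1 => s0 sr; rewrite (bigD1 r) //= eqxx eq_sym (negbTE sr).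
      under eq_bigr => z _ do rewrite mulr1; rewrite fmean.
      by rewrite mul0r.
    rewrite (bigD1 r) //= eqxx [X in _ * X]big1 ?mulr1.
      by rewrite /V; apply: eq_bigr => z _; rewrite expr2 mulrA.
    move=> t0 tr; rewrite (negbTE tr).
    by under eq_bigr => z _ do rewrite !mulr1; rewrite q_sum.
  set M := 1 + eps^-1.
  have M0 : 0 < M by rewrite addr_gt0 ?invr_gt0.
  have mR0 : (0 : R) < m%:R by rewrite ltr0n.
  set a := Num.sqrt (m%:R : R).
  have a0 : 0 < a by rewrite sqrtr_gt0.
  have a2 : a ^+ 2 = m%:R by rewrite sqr_sqrtr // ltW.
  have ind : forall w : {ffun 'I_m -> assign n},
      ((M / a < `|phat Y S T Z0 w - p|)%R)%:R
      <= (\sum_(r < m) f (w r)) ^+ 2 / (M ^+ 2 * m%:R).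
    move=> w; set Sm := \sum_(r < m) f (w r).
    have phE : phat Y S T Z0 w - p = Sm / m%:R.
      rewrite /phat /Sm /f sumrB sumr_const card_ord -/ex.
      by field; rewrite gt_eqF.
    rewrite phE; case: ltP => h /=; last first.
      by rewrite divr_ge0 ?sqr_ge0 // mulr_ge0 ?sqr_ge0 // ltW.
    rewrite ler_pdivlMr ?mul1r; last by rewrite mulr_gt0 ?exprn_gt0.
    rewrite normrM [`|_^-1|]ger0_norm ?invr_ge0 ?ler0n // in h.
    have h2 : M * a < `|Sm|.
      rewrite -a2 in h.
      have e1 : M / a * a ^+ 2 = M * a by rewrite expr2 mulrA divfK ?gt_eqF.
      have e2 : `|Sm| / a ^+ 2 * a ^+ 2 = `|Sm| by rewrite divfK ?expf_neq0 ?gt_eqF.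
      by rewrite -e1 -e2 ltr_pM2r ?exprn_gt0.
    have h3 : (M * a) ^+ 2 < `|Sm| ^+ 2.
      have hMa : 0 <= M * a by rewrite mulr_ge0 ?ltW.
      rewrite ltr_pXn2r // ?nnegrE //; exact: le_trans (ltW h2).
    by rewrite -a2 -exprMn -(real_normK (num_real Sm)) ltW.
  rewrite /iid_prob.
  apply: (le_lt_trans (y := \sum_(w : {ffun 'I_m -> assign n})
     (\prod_(r < m) q (w r)) * ((\sum_(r < m) f (w r)) ^+ 2 / (M ^+ 2 * m%:R)))).
    apply: ler_sum => w _; apply: ler_wpM2l; last exact: ind.
    by apply: prodr_ge0 => r _.
  under eq_bigr => w _ do rewrite mulrA.
  rewrite -mulr_suml Var.
  have -> : m%:R * V / (M ^+ 2 * m%:R) = V / M ^+ 2.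
    by field; rewrite !gt_eqF.
  have V0 : 0 <= V by apply: sumr_ge0 => z _; rewrite mulr_ge0 ?sqr_ge0.
  have hM : eps^-1 < M by rewrite /M ltrDr.
  have hM1 : 1 < M by rewrite /M ltrDl invr_gt0.
  apply: (le_lt_trans (y := 1 / M)).
    rewrite ler_pdivrMr ?exprn_gt0 // expr2 mulrA divfK ?gt_eqF //.
    by rewrite mul1r; apply: le_trans V1 _; rewrite ltW.
  by rewrite mul1r -(invrK eps) ltf_pV2 ?posrE ?invr_gt0.
Qed.
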